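(* Let $A,B\in\mathbb{R}_+^{m\times n}$. Then: (1) $\hat\rho(A,B)\le\rho(A,B)$. (2) Let $\mathbf{y}$ be weakly optimal. If $A\mathbf{y}>\mathbf{0}$ or $B\mathbf{y}>\mathbf{0}$ (all coordinates positive), then $\rho(A,B)=\hat\rho(A,B)$ and $\mathbf{y}$ is optimal. (3) If $A>0$ or $B>0$ (all entries positive), then $\rho(A,B)=\hat\rho(A,B)$ and every weakly optimal vector is optimal. (4) If $B_l\in\mathbb{R}^{m\times n}$, $l\in\mathbb{N}$, have all entries positive and $\lim_{l\to\infty}B_l=B$, then $\lim_{l\to\infty}\rho(A,B_l)=\hat\rho(A,B)$ (in $[0,\infty]$). (5) If $A_l\in\mathbb{R}^{m\times n}$, $l\in\mathbb{N}$, have all entries positive, $\lim_{l\to\infty}A_l=A$, and $B$ has no zero row, then $\lim_{l\to\infty}\rho(A_l,B)=\rho(A,B)$.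
   Context: $[m]=\{1,\dots,m\}$. For $A,B\in\mathbb{R}_+^{m\times n}$ (entrywise nonnegative real matrices) and $\mathbf{x}\in\mathbb{R}^n_+\setminus\{\mathbf{0}\}$, set $r(A,B,\mathbf{x})=\max_{i\in[m]}\frac{(A\mathbf{x})_i}{(B\mathbf{x})_i}\in[0,\infty]$ with the conventions $\frac00=0$ and $\frac c0=\infty$ for $c>0$; equivalently $r(A,B,\mathbf{x})=\inf\{t\ge 0: A\mathbf{x}\le tB\mathbf{x}\}$ (with $\inf\emptyset=\infty$). The Collatz–Wielandt quotient is $\rho(A,B)=\inf\{r(A,B,\mathbf{x}):\mathbf{x}>\mathbf{0}\}$ (infimum over vectors with all coordinates positive) and the weak Collatz–Wielandt quotient is $\hat\rho(A,B)=\inf\{r(A,B,\mathbf{x}):\mathbf{x}\in\mathbb{R}^n_+\setminus\{\mathbf{0}\}\}$. A vector $\mathbf{y}\in\mathbb{R}^n_+\setminus\{\mathbf{0}\}$ is weakly optimal if $r(A,B,\mathbf{y})=\hat\rho(A,B)$; it is optimal if $r(A,B,\mathbf{y})=\rho(A,B)$ and there is a sequence $\mathbf{y}_k>\mathbf{0}$ with $\mathbf{y}_k\to\mathbf{y}$ and $r(A,B,\mathbf{y}_k)\to\rho(A,B)$. *)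

(* Defs.v *)
From Stdlib Require Import Reals Lra ClassicalEpsilon.
Open Scope R_scope.

(* Extended nonnegative values [0, oo]: finite reals plus +oo. *)
Inductive ER := Fin (x : R) | PInf.

Definition ER_le (a b : ER) : Prop :=
  match a, b with
  | _, PInf => True
  | PInf, Fin _ => False
  | Fin x, Fin y => x <= y
  end.

Definition ER_max (a b : ER) : ER :=
  match a, b with
  | PInf, _ => PInf
  | _, PInf => PInf
  | Fin x, Fin y => Fin (Rmax x y)
  end.

Definition is_ER_inf (S : ER -> Prop) (v : ER) : Prop :=
  (forall s, S s -> ER_le v s) /\
  (forall w, (forall s, S s -> ER_le w s) -> ER_le w v).

(* the infimum (inf of the empty set is +oo); chosen by classical choice *)
Definition ER_inf (S : ER -> Prop) : ER :=
  epsilon (inhabits PInf) (is_ER_inf S).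

Definition ER_cv (u : nat -> ER) (v : ER) : Prop :=
  match v with
  | Fin L => forall eps, eps > 0 -> exists N, forall k, (N <= k)%nat ->
               exists x, u k = Fin x /\ Rabs (x - L) < eps
  | PInf => forall M, exists N, forall k, (N <= k)%nat -> ER_le (Fin M) (u k)
  end.

(* Matrices / vectors: entries indexed from 0; only i < m, j < n matter. *)
Definition mat := nat -> nat -> R.
Definition vec := nat -> R.

Fixpoint rsum (n : nat) (f : nat -> R) : R :=
  match n with O => 0 | S k => rsum k f + f k end.

Definition mv (n : nat) (A : mat) (x : vec) (i : nat) : R :=
  rsum n (fun j => A i j * x j).

(* a / b with conventions 0/0 = 0 and c/0 = oo for c > 0 *)
Definition ratio (a b : R) : ER :=
  if Req_EM_T b 0 then (if Req_EM_T a 0 then Fin 0 else PInf) else Fin (a / b).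

Fixpoint ER_maxn (m : nat) (f : nat -> ER) : ER :=
  match m with O => Fin 0 | S k => ER_max (ER_maxn k f) (f k) end.

Definition rq (m n : nat) (A B : mat) (x : vec) : ER :=
  ER_maxn m (fun i => ratio (mv n A x i) (mv n B x i)).

Definition nonneg_mat (m n : nat) (A : mat) : Prop :=
  forall i j, (i < m)%nat -> (j < n)%nat -> 0 <= A i j.
Definition pos_mat (m n : nat) (A : mat) : Prop :=
  forall i j, (i < m)%nat -> (j < n)%nat -> 0 < A i j.
Definition pos_vec (n : nat) (x : vec) : Prop :=
  forall j, (j < n)%nat -> 0 < x j.
Definition nonneg_nz_vec (n : nat) (x : vec) : Prop :=
  (forall j, (j < n)%nat -> 0 <= x j) /\ (exists j, (j < n)%nat /\ x j <> 0).
Definition no_zero_row (m n : nat) (B : mat) : Prop :=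
  forall i, (i < m)%nat -> exists j, (j < n)%nat /\ B i j <> 0.

Definition rho (m n : nat) (A B : mat) : ER :=
  ER_inf (fun t => exists x, pos_vec n x /\ t = rq m n A B x).
Definition rhohat (m n : nat) (A B : mat) : ER :=
  ER_inf (fun t => exists x, nonneg_nz_vec n x /\ t = rq m n A B x).

Definition weakly_optimal (m n : nat) (A B : mat) (y : vec) : Prop :=
  nonneg_nz_vec n y /\ rq m n A B y = rhohat m n A B.

Definition optimal (m n : nat) (A B : mat) (y : vec) : Prop :=
  nonneg_nz_vec n y /\ rq m n A B y = rho m n A B /\
  exists yk : nat -> vec,
    (forall k, pos_vec n (yk k)) /\
    (forall j, (j < n)%nat -> Un_cv (fun k => yk k j) (y j)) /\
    ER_cv (fun k => rq m n A B (yk k)) (rho m n A B).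

Definition mat_cv (m n : nat) (Al : nat -> mat) (A : mat) : Prop :=
  forall i j, (i < m)%nat -> (j < n)%nat -> Un_cv (fun l => Al l i j) (A i j).

(* Main.v *)
Require Import Defs.
From Stdlib Require Import Reals.
From Stdlib Require Import Lra Lia Classical ClassicalEpsilon Rtopology.
Open Scope R_scope.

Lemma ER_le_refl a : ER_le a a.
Proof. destruct a; simpl; lra. Qed.

Lemma ER_le_trans a b c : ER_le a b -> ER_le b c -> ER_le a c.
Proof. destruct a, b, c; simpl; try tauto; lra. Qed.

Lemma ER_le_total a b : ER_le a b \/ ER_le b a.
Proof. destruct a, b; simpl; try tauto; lra. Qed.

Lemma ER_not_le a b : ~ ER_le a b -> ER_le b a.
Proof. intro H; destruct (ER_le_total a b); tauto. Qed.

Lemma ER_le_antisym a b : ER_le a b -> ER_le b a -> a = b.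
Proof. destruct a, b; simpl; try tauto; intros; f_equal; lra. Qed.

Lemma ER_max_le a b v : ER_le (ER_max a b) v <-> ER_le a v /\ ER_le b v.
Proof.
  destruct a, b, v; simpl; try tauto.
  split. intros H; split; eapply Rle_trans; [apply Rmax_l|exact H|apply Rmax_r|exact H].
  intros [H1 H2]; apply Rmax_lub; auto.
Qed.

Lemma maxn_le m f v : ER_le (ER_maxn m f) v <->
  ER_le (Fin 0) v /\ forall i, (i < m)%nat -> ER_le (f i) v.
Proof.
  induction m; simpl.
  - split; [intros H; split; [auto|intros; lia]|tauto].
  - rewrite ER_max_le, IHm. split.
    + intros [[H0 H1] H2]; split; auto. intros i Hi.
      destruct (Nat.eq_dec i m); [subst; auto| apply H1; lia].
    + intros [H0 H1]; split; [split; auto|]; auto.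
Qed.

Lemma maxn_ge0 m f : ER_le (Fin 0) (ER_maxn m f).
Proof.
  induction m; simpl. lra.
  destruct (ER_maxn m f), (f m); simpl in *; auto. eapply Rle_trans; [exact IHm|apply Rmax_l].
Qed.

Lemma rq_ge0 m n A B x : ER_le (Fin 0) (rq m n A B x).
Proof. apply maxn_ge0. Qed.

Lemma inf_exists (S : ER -> Prop) : (forall s, S s -> ER_le (Fin 0) s) -> exists v, is_ER_inf S v.
Proof.
  intros H0.
  destruct (classic (exists x, S (Fin x))) as [[x0 Hx0]|Hno].
  - set (E := fun y => S (Fin (- y))).
    assert (Hb : bound E). { exists 0. intros y Hy. specialize (H0 _ Hy). simpl in H0. lra. }
    assert (He : exists y, E y). { exists (- x0). unfold E. rewrite Ropp_involutive. auto. }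
    destruct (completeness E Hb He) as [mm [Hub Hlub]].
    exists (Fin (- mm)). split.
    + intros s Hs. destruct s as [x|]; simpl; auto.
      assert (E (- x)) by (unfold E; rewrite Ropp_involutive; auto).
      specialize (Hub _ H). lra.
    + intros w Hw. destruct w as [z|].
      * simpl. assert (mm <= - z). { apply Hlub. intros y Hy. specialize (Hw _ Hy). simpl in Hw. lra. }
        lra.
      * specialize (Hw _ Hx0). simpl in Hw. tauto.
  - exists PInf. split.
    + intros s Hs. destruct s; simpl; auto. apply Hno; eauto.
    + intros; destruct w; simpl; auto.
Qed.

Lemma ER_inf_spec S : (forall s, S s -> ER_le (Fin 0) s) -> is_ER_inf S (ER_inf S).
Proof. intros H. unfold ER_inf. apply epsilon_spec. apply inf_exists; auto. Qed.

Lemma inf_lb S s : (forall s, S s -> ER_le (Fin 0) s) -> S s -> ER_le (ER_inf S) s.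
Proof. intros H Hs. apply (proj1 (ER_inf_spec S H)); auto. Qed.

Lemma inf_glb S w : (forall s, S s -> ER_le (Fin 0) s) -> (forall s, S s -> ER_le w s) -> ER_le w (ER_inf S).
Proof. intros H Hw. apply (proj2 (ER_inf_spec S H)); auto. Qed.

Lemma inf_approx S t t' : (forall s, S s -> ER_le (Fin 0) s) -> ER_le (ER_inf S) (Fin t) -> t < t' ->
  exists s, S s /\ ER_le s (Fin t').
Proof.
  intros H Hv Ht. apply NNPP; intro Hn.
  assert (Hc : ER_le (Fin t') (ER_inf S)).
  { apply inf_glb; auto. intros s Hs. apply ER_not_le. intro; apply Hn; eauto. }
  pose proof (ER_le_trans _ _ _ Hc Hv) as Hd. simpl in Hd. lra.
Qed.

Lemma rsum_ge0 n f : (forall j, (j < n)%nat -> 0 <= f j) -> 0 <= rsum n f.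
Proof.
  induction n; simpl; intros H. lra.
  assert (0 <= f n) by (apply H; lia). assert (0 <= rsum n f) by (apply IHn; intros; apply H; lia). lra.
Qed.

Lemma rsum_ge_term n f j : (forall j, (j < n)%nat -> 0 <= f j) -> (j < n)%nat -> f j <= rsum n f.
Proof.
  induction n; simpl; intros H Hj. lia.
  destruct (Nat.eq_dec j n).
  - subst. assert (0 <= rsum n f) by (apply rsum_ge0; intros; apply H; lia). lra.
  - assert (f j <= rsum n f) by (apply IHn; [intros; apply H; lia| lia]).
    assert (0 <= f n) by (apply H; lia). lra.
Qed.

Lemma rsum_le n f g : (forall j, (j < n)%nat -> f j <= g j) -> rsum n f <= rsum n g.
Proof.
  induction n; simpl; intros H. lra.
  assert (f n <= g n) by (apply H; lia). assert (rsum n f <= rsum n g) by (apply IHn; intros; apply H; lia). lra.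
Qed.

Lemma rsum_scal n c f : rsum n (fun j => c * f j) = c * rsum n f.
Proof. induction n; simpl. ring. rewrite IHn. ring. Qed.

Lemma rsum_ext n f g : (forall j, (j < n)%nat -> f j = g j) -> rsum n f = rsum n g.
Proof.
  induction n; simpl; intros H. auto. rewrite IHn by (intros; apply H; lia). rewrite H by lia. auto.
Qed.

Lemma rsum_cv n (u : nat -> nat -> R) (l : nat -> R) :
  (forall j, (j < n)%nat -> Un_cv (fun k => u k j) (l j)) ->
  Un_cv (fun k => rsum n (u k)) (rsum n l).
Proof.
  induction n; simpl; intros H.
  - intros eps He. exists 0%nat. intros. unfold R_dist. rewrite Rminus_diag, Rabs_R0. auto.
  - apply CV_plus. apply IHn; intros; apply H; lia. apply H; lia.
Qed.

Lemma Un_cv_const c : Un_cv (fun _ => c) c.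
Proof. intros eps He. exists 0%nat. intros. unfold R_dist. rewrite Rminus_diag, Rabs_R0. auto. Qed.

Lemma mv_ge0 m n A x i : nonneg_mat m n A -> (forall j, (j < n)%nat -> 0 <= x j) -> (i < m)%nat ->
  0 <= mv n A x i.
Proof.
  intros HA Hx Hi. unfold mv. apply rsum_ge0. intros j Hj. apply Rmult_le_pos; auto.
Qed.

Lemma mv_cv n i (M : nat -> mat) M0 (X : nat -> vec) X0 :
  (forall j, (j < n)%nat -> Un_cv (fun k => M k i j) (M0 i j)) ->
  (forall j, (j < n)%nat -> Un_cv (fun k => X k j) (X0 j)) ->
  Un_cv (fun k => mv n (M k) (X k) i) (mv n M0 X0 i).
Proof.
  intros HM HX. unfold mv. apply (rsum_cv n (fun k j => M k i j * X k j) (fun j => M0 i j * X0 j)).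
  intros j Hj. apply CV_mult; auto.
Qed.

Lemma ratio_le a b s : 0 <= a -> 0 <= b -> 0 <= s ->
  (ER_le (ratio a b) (Fin s) <-> a <= s * b).
Proof.
  intros Ha Hb Hs. unfold ratio.
  destruct (Req_EM_T b 0) as [Hb0|Hb0].
  - subst. destruct (Req_EM_T a 0); simpl; split; intros; try lra; tauto.
  - simpl. assert (0 < b) by lra. split; intros H0.
    + apply Rmult_le_compat_r with (r := b) in H0; [|lra].
      unfold Rdiv in H0. rewrite Rmult_assoc, Rinv_l, Rmult_1_r in H0 by lra. lra.
    + apply Rmult_le_reg_r with b; auto. unfold Rdiv. rewrite Rmult_assoc, Rinv_l by lra. lra.
Qed.

Definition nnvec (n : nat) (x : vec) := forall j, (j < n)%nat -> 0 <= x j.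

Lemma rq_le m n A B x s : nonneg_mat m n A -> nonneg_mat m n B -> nnvec n x -> 0 <= s ->
  (ER_le (rq m n A B x) (Fin s) <-> forall i, (i < m)%nat -> mv n A x i <= s * mv n B x i).
Proof.
  intros HA HB Hx Hs. unfold rq. rewrite maxn_le. split.
  - intros [_ H] i Hi. apply ratio_le; auto. eapply mv_ge0; eauto. eapply mv_ge0; eauto.
  - intros H; split; [simpl; auto|]. intros i Hi. apply ratio_le; auto.
    eapply mv_ge0; eauto. eapply mv_ge0; eauto.
Qed.

Definition ev (P : nat -> Prop) := exists N, forall k, (N <= k)%nat -> P k.

Lemma ev_and P Q : ev P -> ev Q -> ev (fun k => P k /\ Q k).
Proof. intros [N1 H1] [N2 H2]. exists (max N1 N2). intros; split; [apply H1|apply H2]; lia. Qed.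

Lemma ev_mono (P Q : nat -> Prop) : (forall k, P k -> Q k) -> ev P -> ev Q.
Proof. intros H [N HN]; exists N; auto. Qed.

Lemma ev_forall m (P : nat -> nat -> Prop) :
  (forall i, (i < m)%nat -> ev (P i)) -> ev (fun k => forall i, (i < m)%nat -> P i k).
Proof.
  induction m; intros H.
  - exists 0%nat; intros; lia.
  - destruct (ev_and _ _ (IHm (fun i Hi => H i ltac:(lia))) (H m ltac:(lia))) as [N HN].
    exists N. intros k Hk i Hi. destruct (HN k Hk) as [H1 H2].
    destruct (Nat.eq_dec i m); [subst; auto| apply H1; lia].
Qed.

Lemma ev_pos u l : Un_cv u l -> 0 < l -> ev (fun k => 0 < u k).
Proof.
  intros H Hl. destruct (H l Hl) as [N HN]. exists N. intros k Hk.
  specialize (HN k Hk). unfold R_dist in HN. apply Rabs_def2 in HN. lra.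
Qed.

Lemma ev_ineq a b la lb s : Un_cv a la -> Un_cv b lb -> la < s * lb ->
  ev (fun k => a k < s * b k).
Proof.
  intros Ha Hb H.
  assert (Un_cv (fun k => s * b k - a k) (s * lb - la)).
  { apply CV_minus; auto. apply CV_mult; auto. apply Un_cv_const. }
  apply ev_pos in H0; [|lra]. eapply ev_mono; [|exact H0]. simpl; intros; lra.
Qed.

Lemma ev_ineq' a b la lb s : Un_cv a la -> Un_cv b lb -> s * lb < la ->
  ev (fun k => s * b k < a k).
Proof.
  intros Ha Hb H.
  assert (Un_cv (fun k => a k - s * b k) (la - s * lb)).
  { apply CV_minus; auto. apply CV_mult; auto. apply Un_cv_const. }
  apply ev_pos in H0; [|lra]. eapply ev_mono; [|exact H0]. simpl; intros; lra.
Qed.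

Lemma inv_cv : Un_cv (fun k => / (INR k + 1)) 0.
Proof.
  intros eps He. destruct (INR_archimed eps 1 He) as [N HN]. exists N. intros k Hk.
  unfold R_dist. rewrite Rminus_0_r.
  assert (Hk' : INR N <= INR k) by (apply le_INR; lia).
  assert (0 <= INR N) by apply pos_INR.
  assert (Hp : 0 < INR k + 1) by lra.
  rewrite Rabs_pos_eq by (left; apply Rinv_0_lt_compat; lra).
  apply Rmult_lt_reg_l with (INR k + 1); auto. rewrite Rinv_r by lra. nra.
Qed.

Definition pert (x : vec) (k : nat) : vec := fun j => x j + / (INR k + 1).

Lemma pert_pos n x k : nnvec n x -> pos_vec n (pert x k).
Proof.
  intros Hx j Hj. unfold pert. assert (0 < / (INR k + 1)).
  { apply Rinv_0_lt_compat. pose proof (pos_INR k). lra. }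
  specialize (Hx j Hj). lra.
Qed.

Lemma pert_cv x j : Un_cv (fun k => pert x k j) (x j).
Proof.
  unfold pert. pose proof (CV_plus _ _ _ _ (Un_cv_const (x j)) inv_cv) as H.
  rewrite Rplus_0_r in H. exact H.
Qed.

Lemma pos_nn n x : pos_vec n x -> nnvec n x.
Proof. intros H j Hj; left; auto. Qed.

Lemma lsc m n A B x (Ak Bk : nat -> mat) (xk : nat -> vec) s :
  nonneg_mat m n A -> nonneg_mat m n B -> nnvec n x ->
  (forall k, nonneg_mat m n (Ak k)) -> (forall k, nonneg_mat m n (Bk k)) -> (forall k, nnvec n (xk k)) ->
  0 <= s ->
  (forall i, (i < m)%nat -> Un_cv (fun k => mv n (Ak k) (xk k) i) (mv n A x i)) ->
  (forall i, (i < m)%nat -> Un_cv (fun k => mv n (Bk k) (xk k) i) (mv n B x i)) ->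
  ~ ER_le (rq m n A B x) (Fin s) ->
  ev (fun k => ER_le (Fin s) (rq m n (Ak k) (Bk k) (xk k))).
Proof.
  intros HA HB Hx HAk HBk Hxk Hs Hca Hcb Hn.
  rewrite rq_le in Hn by auto.
  apply not_all_ex_not in Hn. destruct Hn as [i Hi].
  apply imply_to_and in Hi. destruct Hi as [Hi Hlt]. apply Rnot_le_lt in Hlt.
  destruct (ev_ineq' _ _ _ _ s (Hca i Hi) (Hcb i Hi) Hlt) as [N HN].
  exists N. intros k Hk. apply ER_not_le. rewrite rq_le by auto. intros Hall.
  specialize (Hall i Hi). specialize (HN k Hk). simpl in HN. lra.
Qed.

Lemma usc m n (Ak Bk : nat -> mat) (xk : nat -> vec) (a b : nat -> R) s :
  (forall k, nonneg_mat m n (Ak k)) -> (forall k, nonneg_mat m n (Bk k)) -> (forall k, nnvec n (xk k)) ->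
  0 <= s ->
  (forall i, (i < m)%nat ->
     (Un_cv (fun k => mv n (Ak k) (xk k) i) (a i) /\ Un_cv (fun k => mv n (Bk k) (xk k) i) (b i) /\
      a i < s * b i) \/ ev (fun k => mv n (Ak k) (xk k) i <= s * mv n (Bk k) (xk k) i)) ->
  ev (fun k => ER_le (rq m n (Ak k) (Bk k) (xk k)) (Fin s)).
Proof.
  intros HAk HBk Hxk Hs H.
  assert (H2 : forall i, (i < m)%nat -> ev (fun k => mv n (Ak k) (xk k) i <= s * mv n (Bk k) (xk k) i)).
  { intros i Hi. destruct (H i Hi) as [[Ha [Hb Hl]]|He]; auto.
    eapply ev_mono; [|exact (ev_ineq _ _ _ _ _ Ha Hb Hl)]. simpl; intros; lra. }
  apply ev_forall in H2. eapply ev_mono; [|exact H2]. simpl. intros k Hk.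
  rewrite rq_le; auto.
Qed.

Lemma ER_cv_fin u L :
  (forall eps, eps > 0 -> ev (fun k => ER_le (u k) (Fin (L + eps)))) ->
  (forall eps, eps > 0 -> ev (fun k => ER_le (Fin (L - eps)) (u k))) ->
  ER_cv u (Fin L).
Proof.
  intros H1 H2 eps He. destruct (ev_and _ _ (H1 (eps/2) ltac:(lra)) (H2 (eps/2) ltac:(lra))) as [N HN].
  exists N. intros k Hk. destruct (HN k Hk) as [Ha Hb].
  destruct (u k) as [y|]; simpl in *; [|tauto]. exists y; split; auto.
  apply Rabs_def1; lra.
Qed.

Lemma ER_cv_lb (u : nat -> ER) v w : (forall k, ER_le w (u k)) -> ER_cv u v -> ER_le w v.
Proof.
  intros Hw Hc. destruct v as [L|]; [|destruct w; simpl; auto].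
  destruct w as [z|].
  - simpl. apply Rnot_lt_le. intro Hlt.
    destruct (Hc (z - L) ltac:(lra)) as [N HN]. destruct (HN N (le_n N)) as [y [Hy Ha]].
    specialize (Hw N). rewrite Hy in Hw. simpl in Hw. apply Rabs_def2 in Ha. lra.
  - destruct (Hc 1 ltac:(lra)) as [N HN]. destruct (HN N (le_n N)) as [y [Hy _]].
    specialize (Hw N). rewrite Hy in Hw. simpl in Hw. auto.
Qed.

Lemma mv_cv_const n i A (X : nat -> vec) X0 :
  (forall j, (j < n)%nat -> Un_cv (fun k => X k j) (X0 j)) ->
  Un_cv (fun k => mv n A (X k) i) (mv n A X0 i).
Proof. intros H. apply (mv_cv n i (fun _ => A) A X X0); auto. intros; apply Un_cv_const. Qed.

Lemma pert_conv m n A B x : nonneg_mat m n A -> nonneg_mat m n B -> nnvec n x ->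
  ((forall i, (i < m)%nat -> 0 < mv n A x i) \/ (forall i, (i < m)%nat -> 0 < mv n B x i)) ->
  ER_cv (fun k => rq m n A B (pert x k)) (rq m n A B x).
Proof.
  intros HA HB Hx Hpos.
  assert (Hxk : forall k, nnvec n (pert x k)) by (intros; apply pos_nn, pert_pos; auto).
  assert (Hca : forall i, (i < m)%nat -> Un_cv (fun k => mv n A (pert x k) i) (mv n A x i))
    by (intros; apply mv_cv_const; intros; apply pert_cv).
  assert (Hcb : forall i, (i < m)%nat -> Un_cv (fun k => mv n B (pert x k) i) (mv n B x i))
    by (intros; apply mv_cv_const; intros; apply pert_cv).
  pose proof (rq_ge0 m n A B x) as H0.
  destruct (rq m n A B x) as [L|] eqn:E.
  - simpl in H0. apply ER_cv_fin.
    + intros eps He.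
      apply (usc m n (fun _ => A) (fun _ => B) (pert x) (fun i => mv n A x i) (fun i => mv n B x i));
        auto; try lra.
      intros i Hi. left. split; [auto|split; auto].
      assert (Hle : ER_le (rq m n A B x) (Fin L)) by (rewrite E; simpl; lra).
      rewrite rq_le in Hle by auto. specialize (Hle i Hi).
      pose proof (mv_ge0 m n A x i HA Hx Hi). pose proof (mv_ge0 m n B x i HB Hx Hi).
      assert (0 < mv n B x i).
      { destruct Hpos as [Hp|Hp]; specialize (Hp i Hi); auto. nra. }
      nra.
    + intros eps He. destruct (Rle_dec (L - eps) 0) as [Hl|Hl].
      * exists 0%nat. intros k _. eapply ER_le_trans; [|apply rq_ge0]. simpl; auto.
      * apply (lsc m n A B x (fun _ => A) (fun _ => B) (pert x)); auto; try lra.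
        rewrite E. simpl. lra.
  - intros M. destruct (Rle_dec M 0) as [Hl|Hl].
    + exists 0%nat. intros k _. eapply ER_le_trans; [|apply rq_ge0]. simpl; auto.
    + apply (lsc m n A B x (fun _ => A) (fun _ => B) (pert x)); auto; try lra.
      rewrite E. simpl. auto.
Qed.

Lemma rho_S_ge0 m n A B : forall s, (exists x, pos_vec n x /\ s = rq m n A B x) -> ER_le (Fin 0) s.
Proof. intros s [x [_ ->]]; apply rq_ge0. Qed.
Lemma rhohat_S_ge0 m n A B : forall s, (exists x, nonneg_nz_vec n x /\ s = rq m n A B x) -> ER_le (Fin 0) s.
Proof. intros s [x [_ ->]]; apply rq_ge0. Qed.

Lemma rho_le_rq m n A B x : pos_vec n x -> ER_le (rho m n A B) (rq m n A B x).
Proof. intros H. apply inf_lb. apply rho_S_ge0. eauto. Qed.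
Lemma rhohat_le_rq m n A B x : nonneg_nz_vec n x -> ER_le (rhohat m n A B) (rq m n A B x).
Proof. intros H. apply inf_lb. apply rhohat_S_ge0. eauto. Qed.

Lemma part1 m n A B : (0 < n)%nat -> ER_le (rhohat m n A B) (rho m n A B).
Proof.
  intros hn. apply inf_glb. apply rho_S_ge0. intros s [x [Hx ->]].
  apply rhohat_le_rq. split. apply pos_nn; auto. exists 0%nat. split; auto. specialize (Hx 0%nat hn). lra.
Qed.

Lemma rho_le_pert m n A B x : nonneg_mat m n A -> nonneg_mat m n B -> nnvec n x ->
  ((forall i, (i < m)%nat -> 0 < mv n A x i) \/ (forall i, (i < m)%nat -> 0 < mv n B x i)) ->
  ER_le (rho m n A B) (rq m n A B x).
Proof.
  intros HA HB Hx Hp. eapply ER_cv_lb; [|apply pert_conv; eauto].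
  intros k. apply rho_le_rq. apply pert_pos; auto.
Qed.

Lemma part2 m n A B : (0 < n)%nat -> nonneg_mat m n A -> nonneg_mat m n B ->
  forall y, weakly_optimal m n A B y ->
     ((forall i, (i < m)%nat -> 0 < mv n A y i) \/
      (forall i, (i < m)%nat -> 0 < mv n B y i)) ->
     rho m n A B = rhohat m n A B /\ optimal m n A B y.
Proof.
  intros hn HA HB y [Hy Hw] Hp.
  assert (Hyn : nnvec n y) by exact (proj1 Hy).
  assert (Hr : rho m n A B = rhohat m n A B).
  { apply ER_le_antisym; [|apply part1; auto]. rewrite <- Hw. apply rho_le_pert; auto. }
  split; auto. split; [exact Hy|]. split; [congruence|].
  exists (pert y). split; [intros; apply pert_pos; auto|]. split; [intros; apply pert_cv|].
  replace (rho m n A B) with (rq m n A B y) by congruence. apply pert_conv; auto.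
Qed.

Lemma pos_nonneg m n A : pos_mat m n A -> nonneg_mat m n A.
Proof. intros H i j Hi Hj; left; auto. Qed.

Lemma pos_mv m n A x i : pos_mat m n A -> nonneg_nz_vec n x -> (i < m)%nat -> 0 < mv n A x i.
Proof.
  intros HA [Hx [j0 [Hj0 Hnz]]] Hi. unfold mv.
  eapply Rlt_le_trans; [|apply (rsum_ge_term n (fun j => A i j * x j) j0)]; auto.
  - simpl. apply Rmult_lt_0_compat; auto. specialize (Hx j0 Hj0). lra.
  - intros j Hj. apply Rmult_le_pos; [left; auto| auto].
Qed.

Lemma part3 m n A B : (0 < n)%nat -> nonneg_mat m n A -> nonneg_mat m n B ->
  (pos_mat m n A \/ pos_mat m n B ->
     rho m n A B = rhohat m n A B /\
     (forall y, weakly_optimal m n A B y -> optimal m n A B y)).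
Proof.
  intros hn HA HB Hp.
  assert (Hq : forall x, nonneg_nz_vec n x ->
    (forall i, (i < m)%nat -> 0 < mv n A x i) \/ (forall i, (i < m)%nat -> 0 < mv n B x i)).
  { intros x Hx. destruct Hp as [Hp|Hp]; [left|right]; intros; eapply pos_mv; eauto. }
  assert (Hr : rho m n A B = rhohat m n A B).
  { apply ER_le_antisym; [|apply part1; auto]. apply inf_glb. apply rhohat_S_ge0.
    intros s [x [Hx ->]]. apply rho_le_pert; auto. exact (proj1 Hx). }
  split; auto. intros y Hy. apply part2; auto. apply Hq. apply Hy.
Qed.

Lemma maxn_fin m f : (forall i, (i < m)%nat -> exists x, f i = Fin x) -> exists x, ER_maxn m f = Fin x.
Proof.
  induction m; simpl; intros H. eauto.
  destruct IHm as [x Hx]. intros; apply H; lia. destruct (H m ltac:(lia)) as [y Hy].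
  rewrite Hx, Hy. simpl. eauto.
Qed.

Lemma rq_fin m n A B x : (forall i, (i < m)%nat -> mv n B x i <> 0) -> exists L, rq m n A B x = Fin L.
Proof.
  intros H. apply maxn_fin. intros i Hi. unfold ratio.
  destruct (Req_EM_T (mv n B x i) 0); [exfalso; eapply H; eauto| eauto].
Qed.

Lemma nzrow_mv m n B x i : nonneg_mat m n B -> no_zero_row m n B -> pos_vec n x -> (i < m)%nat ->
  0 < mv n B x i.
Proof.
  intros HB Hz Hx Hi. destruct (Hz i Hi) as [j0 [Hj0 Hnz]]. unfold mv.
  eapply Rlt_le_trans; [|apply (rsum_ge_term n (fun j => B i j * x j) j0)]; auto.
  - simpl. apply Rmult_lt_0_compat; auto. specialize (HB i j0 Hi Hj0). lra.
  - intros j Hj. apply Rmult_le_pos; [auto| left; auto].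
Qed.

Lemma rho_ge0 m n A B : ER_le (Fin 0) (rho m n A B).
Proof. apply inf_glb. apply rho_S_ge0. apply rho_S_ge0. Qed.
Lemma rhohat_ge0 m n A B : ER_le (Fin 0) (rhohat m n A B).
Proof. apply inf_glb. apply rhohat_S_ge0. apply rhohat_S_ge0. Qed.

Lemma mv_scale_le n i A A' c x : nnvec n x -> (forall j, (j < n)%nat -> A i j <= c * A' i j) ->
  mv n A x i <= c * mv n A' x i.
Proof.
  intros Hx H. unfold mv. rewrite <- rsum_scal. apply rsum_le. intros j Hj.
  specialize (H j Hj). specialize (Hx j Hj). rewrite <- Rmult_assoc. apply Rmult_le_compat_r; auto.
Qed.

Lemma part5 m n A B : (0 < n)%nat -> nonneg_mat m n A -> nonneg_mat m n B ->
  (forall Al : nat -> mat, (forall l, pos_mat m n (Al l)) -> mat_cv m n Al A ->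
     no_zero_row m n B ->
     ER_cv (fun l => rho m n (Al l) B) (rho m n A B)).
Proof.
  intros hn HA HB Al HAl Hcv Hz.
  assert (HAl' : forall l, nonneg_mat m n (Al l)) by (intros; apply pos_nonneg; auto).
  set (one := fun _ : nat => 1).
  assert (Hone : pos_vec n one) by (intros j _; unfold one; lra).
  destruct (rq_fin m n A B one) as [L1 HL1].
  { intros i Hi. pose proof (nzrow_mv m n B one i HB Hz Hone Hi). lra. }
  pose proof (rho_le_rq m n A B one Hone) as Hr1. rewrite HL1 in Hr1.
  pose proof (rho_ge0 m n A B) as Hr0.
  destruct (rho m n A B) as [L|] eqn:E; [|simpl in Hr1; tauto]. simpl in Hr0.
  apply ER_cv_fin.
  - intros eps He.
    assert (HleL : ER_le (rho m n A B) (Fin L)) by (rewrite E; simpl; lra).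
    destruct (inf_approx _ L (L + eps/2) (rho_S_ge0 m n A B) HleL ltac:(lra)) as [s [[x [Hx ->]] Hs]].
    assert (Hev : ev (fun k => ER_le (rq m n (Al k) B x) (Fin (L + eps)))).
    { apply (usc m n Al (fun _ => B) (fun _ => x) (fun i => mv n A x i) (fun i => mv n B x i)); auto.
      - intros; apply pos_nn; auto.
      - lra.
      - intros i Hi. left. split; [|split].
        + apply (mv_cv n i Al A (fun _ => x) x); [intros; apply Hcv; auto| intros; apply Un_cv_const].
        + apply Un_cv_const.
        + rewrite rq_le in Hs by (auto; try apply pos_nn; auto; lra).
          specialize (Hs i Hi). pose proof (nzrow_mv m n B x i HB Hz Hx Hi). nra. }
    eapply ev_mono; [|exact Hev]. simpl. intros k Hk.
    eapply ER_le_trans; [apply rho_le_rq; eauto| exact Hk].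
  - intros eps He. destruct (Rle_dec (L - eps) 0) as [Hl|Hl].
    + exists 0%nat. intros k _. eapply ER_le_trans; [|apply rho_ge0]. simpl; auto.
    + set (c := (L - eps/2) / (L - eps)).
      assert (Hc : c * (L - eps) = L - eps/2) by (unfold c; field; lra).
      assert (Hc1 : 1 < c).
      { unfold c. apply Rmult_lt_reg_r with (L - eps); [lra|]. unfold Rdiv.
        rewrite Rmult_assoc, Rinv_l by lra. lra. }
      assert (Hev : ev (fun k => forall i, (i < m)%nat -> forall j, (j < n)%nat -> A i j <= c * Al k i j)).
      { apply ev_forall. intros i Hi. apply ev_forall. intros j Hj.
        destruct (Req_EM_T (A i j) 0) as [H0|H0].
        - exists 0%nat. intros k _. rewrite H0. specialize (HAl k i j Hi Hj). nra.
        - assert (HAij : 0 < A i j) by (specialize (HA i j Hi Hj); lra).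
          eapply ev_mono; [|apply (ev_ineq (fun _ => A i j) (fun k => Al k i j) (A i j) (A i j) c)].
          + simpl; intros; lra.
          + apply Un_cv_const.
          + apply Hcv; auto.
          + nra. }
      eapply ev_mono; [|exact Hev]. intros k Hk. cbv beta. unfold rho.
      apply inf_glb. apply rho_S_ge0. intros s [x [Hx ->]].
      apply ER_not_le. intro Hle.
      rewrite rq_le in Hle by (auto; try apply pos_nn; auto; lra).
      assert (Hle2 : ER_le (rq m n A B x) (Fin (L - eps/2))).
      { rewrite rq_le by (auto; try apply pos_nn; auto; lra). intros i Hi.
        eapply Rle_trans; [apply (mv_scale_le n i A (Al k) c x); [apply pos_nn; auto| intros; apply Hk; auto]|].
        rewrite <- Hc, Rmult_assoc. apply Rmult_le_compat_l; [lra|]. apply Hle; auto. }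
      pose proof (ER_le_trans _ _ _ (rho_le_rq m n A B x Hx) Hle2) as Hf. rewrite E in Hf. simpl in Hf. lra.
Qed.

Lemma subseq_cv u l f : Un_cv u l -> (forall k, (k <= f k)%nat) -> Un_cv (fun k => u (f k)) l.
Proof.
  intros H Hf eps He. destruct (H eps He) as [N HN]. exists N. intros k Hk. apply HN.
  specialize (Hf k). lia.
Qed.

Lemma bw1 (u : nat -> R) : (forall k, 0 <= u k <= 1) ->
  exists (phi : nat -> nat) l, (forall k, (k <= phi k)%nat) /\ Un_cv (fun k => u (phi k)) l.
Proof.
  intros Hu. destruct (Bolzano_Weierstrass u (fun c => 0 <= c <= 1) (compact_P3 0 1) Hu) as [l Hl].
  assert (Hg : forall N k, exists p, (N <= p)%nat /\ Rabs (u p - l) < / (INR k + 1)).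
  { intros N k. assert (Hd : 0 < / (INR k + 1)) by (apply Rinv_0_lt_compat; pose proof (pos_INR k); lra).
    destruct (Hl (disc l (mkposreal _ Hd)) N) as [p [Hp Hv]].
    - exists (mkposreal _ Hd). intros y Hy; exact Hy.
    - exists p; split; auto. }
  set (g := fun N k => proj1_sig (constructive_indefinite_description _ (Hg N k))).
  assert (Hgs : forall N k, (N <= g N k)%nat /\ Rabs (u (g N k) - l) < / (INR k + 1)).
  { intros N k. unfold g. destruct (constructive_indefinite_description _ (Hg N k)); simpl; auto. }
  set (phi := fix phi k := match k with O => g O O | S k' => g (S (phi k')) (S k') end).
  assert (Hp : forall k, (k <= phi k)%nat /\ Rabs (u (phi k) - l) < / (INR k + 1)).
  { induction k; simpl.
    - split; [lia|]. apply Hgs.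
    - destruct (Hgs (S (phi k)) (S k)) as [H1 H2]. split; [|exact H2].
      change ((S k <= g (S (phi k)) (S k))%nat). lia. }
  exists phi, l. split; [apply Hp|].
  intros eps He. destruct (inv_cv eps He) as [N HN]. exists N. intros k Hk.
  specialize (HN k Hk). unfold R_dist in *. rewrite Rminus_0_r in HN.
  destruct (Hp k) as [_ H2]. eapply Rlt_le_trans; [exact H2|]. apply Rabs_def2 in HN. lra.
Qed.

Lemma bwn n (z : nat -> vec) : (forall k j, (j < n)%nat -> 0 <= z k j <= 1) ->
  exists (phi : nat -> nat) z0, (forall k, (k <= phi k)%nat) /\
    forall j, (j < n)%nat -> Un_cv (fun k => z (phi k) j) (z0 j).
Proof.
  induction n; intros Hz.
  - exists (fun k => k), (fun _ => 0). split; [auto|intros; lia].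
  - destruct IHn as [phi [z0 [H1 H2]]]. intros; apply Hz; lia.
    destruct (bw1 (fun k => z (phi k) n)) as [psi [l [H3 H4]]]. intros; apply Hz; lia.
    exists (fun k => phi (psi k)), (fun j => if Nat.eq_dec j n then l else z0 j). split.
    + intros k. specialize (H1 (psi k)). specialize (H3 k). lia.
    + intros j Hj. destruct (Nat.eq_dec j n).
      * subst. exact H4.
      * apply (subseq_cv (fun k => z (phi k) j) (z0 j) psi); auto. apply H2. lia.
Qed.

Lemma mv_scal n A c x i : mv n A (fun j => c * x j) i = c * mv n A x i.
Proof.
  unfold mv. rewrite <- rsum_scal. apply rsum_ext. intros; ring.
Qed.

Lemma rsum_zero n f : (forall j, (j < n)%nat -> f j = 0) -> rsum n f = 0.
Proof.
  induction n; simpl; intros H. auto. rewrite IHn. rewrite H by lia. ring. intros; apply H; lia.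
Qed.

Lemma LB m n A B (Bl : nat -> mat) s : (0 < n)%nat -> nonneg_mat m n A -> nonneg_mat m n B ->
  (forall l, nonneg_mat m n (Bl l)) -> mat_cv m n Bl B -> 0 <= s ->
  (forall N, exists p : nat * vec, (N <= fst p)%nat /\ pos_vec n (snd p) /\
       ER_le (rq m n A (Bl (fst p)) (snd p)) (Fin s)) ->
  ER_le (rhohat m n A B) (Fin s).
Proof.
  intros hn HA HB HBl Hcv Hs H.
  set (P := fun N => proj1_sig (constructive_indefinite_description _ (H N))).
  assert (HP : forall N, (N <= fst (P N))%nat /\ pos_vec n (snd (P N)) /\
       ER_le (rq m n A (Bl (fst (P N))) (snd (P N))) (Fin s)).
  { intros N. unfold P. destruct (constructive_indefinite_description _ (H N)); simpl; auto. }
  set (psi := fun N => fst (P N)). set (X := fun N => snd (P N)).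
  set (Sm := fun k => rsum n (X k)).
  assert (HX : forall k, pos_vec n (X k)) by (intros; apply HP).
  assert (HS : forall k, 0 < Sm k).
  { intros k. unfold Sm. eapply Rlt_le_trans; [apply (HX k 0%nat hn)|]. apply rsum_ge_term; auto.
    apply pos_nn; auto. }
  set (z := fun k j => / Sm k * X k j).
  assert (Hz1 : forall k, rsum n (z k) = 1).
  { intros k. unfold z. rewrite rsum_scal. fold (Sm k). field. specialize (HS k); lra. }
  assert (Hz : forall k j, (j < n)%nat -> 0 <= z k j <= 1).
  { intros k j Hj. unfold z. pose proof (HS k). pose proof (HX k j Hj).
    assert (X k j <= Sm k) by (apply rsum_ge_term; auto; apply pos_nn; auto).
    split. apply Rmult_le_pos; [left; apply Rinv_0_lt_compat|]; lra.
    apply Rmult_le_reg_l with (Sm k); auto. rewrite <- Rmult_assoc, Rinv_r by lra. lra. }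
  assert (Hineq : forall k i, (i < m)%nat -> mv n A (z k) i <= s * mv n (Bl (psi k)) (z k) i).
  { intros k i Hi. destruct (HP k) as [_ [_ H3]]. fold (psi k) (X k) in H3.
    rewrite rq_le in H3 by (auto; apply pos_nn; auto).
    unfold z. rewrite !mv_scal. specialize (H3 i Hi).
    assert (0 < / Sm k) by (apply Rinv_0_lt_compat; auto). nra. }
  destruct (bwn n z Hz) as [phi [z0 [Hphi Hcz]]].
  assert (Hz0 : forall j, (j < n)%nat -> 0 <= z0 j).
  { intros j Hj. apply (@Rle_cv_lim (fun _ => 0) (fun k => z (phi k) j)); auto.
    intros; apply Hz; auto. apply Un_cv_const. }
  assert (Hsum : rsum n z0 = 1).
  { pose proof (rsum_cv n (fun k => z (phi k)) z0 Hcz) as Hc.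
    apply (UL_sequence (fun k => rsum n (z (phi k)))); auto.
    intros eps He. exists 0%nat. intros. rewrite Hz1. unfold R_dist. rewrite Rminus_diag, Rabs_R0. auto. }
  assert (Hnz : nonneg_nz_vec n z0).
  { split; auto. apply NNPP. intro Hn. assert (rsum n z0 = 0).
    { apply rsum_zero. intros j Hj. apply NNPP. intro. apply Hn. eauto. }
    lra. }
  eapply ER_le_trans; [apply rhohat_le_rq; exact Hnz|].
  rewrite rq_le by (auto; apply Hnz). intros i Hi.
  apply (@Rle_cv_lim (fun k => mv n A (z (phi k)) i) (fun k => s * mv n (Bl (psi (phi k))) (z (phi k)) i)).
  - intros k. apply Hineq; auto.
  - apply mv_cv_const; auto.
  - apply CV_mult. apply Un_cv_const. apply mv_cv; auto.
    intros j Hj. apply (subseq_cv (fun l => Bl l i j)). apply Hcv; auto.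
    intros k. specialize (Hphi k). destruct (HP (phi k)) as [H1 _]. unfold psi. lia.
Qed.

Lemma part4 m n A B : (0 < n)%nat -> nonneg_mat m n A -> nonneg_mat m n B ->
  (forall Bl : nat -> mat, (forall l, pos_mat m n (Bl l)) -> mat_cv m n Bl B ->
     ER_cv (fun l => rho m n A (Bl l)) (rhohat m n A B)).
Proof.
  intros hn HA HB Bl HBl Hcv.
  assert (HBl' : forall l, nonneg_mat m n (Bl l)) by (intros; apply pos_nonneg; auto).
  assert (Hr : forall l, rho m n A (Bl l) = rhohat m n A (Bl l)).
  { intros l. apply part3; auto. }
  assert (Hup : forall y t eps, nonneg_nz_vec n y -> 0 <= t -> eps > 0 ->
            ER_le (rq m n A B y) (Fin t) -> ev (fun l => ER_le (rho m n A (Bl l)) (Fin (t + eps)))).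
  { intros y t eps Hy Ht He Hle.
    pose proof (proj1 Hy) as Hyn.
    rewrite rq_le in Hle by auto.
    assert (Hev : ev (fun k => ER_le (rq m n A (Bl k) y) (Fin (t + eps)))).
    { apply (usc m n (fun _ => A) Bl (fun _ => y) (fun i => mv n A y i) (fun i => mv n B y i)); auto; try lra.
      intros i Hi. specialize (Hle i Hi).
      pose proof (mv_ge0 m n A y i HA Hyn Hi). pose proof (mv_ge0 m n B y i HB Hyn Hi).
      destruct (Req_EM_T (mv n B y i) 0) as [HB0|HB0].
      - right. exists 0%nat. intros k _. rewrite HB0 in Hle.
        pose proof (mv_ge0 m n (Bl k) y i (HBl' k) Hyn Hi). nra.
      - left. split; [apply Un_cv_const|split].
        + apply mv_cv; [intros; apply Hcv; auto| intros; apply Un_cv_const].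
        + nra. }
    eapply ev_mono; [|exact Hev]. intros k Hk. cbv beta in *. rewrite Hr.
    eapply ER_le_trans; [apply rhohat_le_rq; exact Hy| exact Hk]. }
  assert (Hlow : forall s, 0 <= s -> ~ ER_le (rhohat m n A B) (Fin s) ->
            ev (fun l => ER_le (Fin s) (rho m n A (Bl l)))).
  { intros s Hs Hn. apply NNPP. intro Hne. apply Hn.
    apply (LB m n A B Bl s); auto.
    intros N. apply NNPP. intro Hno. apply Hne. exists N. intros k Hk.
    apply NNPP. intro Hk2. apply Hno.
    pose proof (rho_ge0 m n A (Bl k)) as H0.
    destruct (rho m n A (Bl k)) as [r|] eqn:E; simpl in Hk2; [|tauto].
    assert (Hrl : ER_le (rho m n A (Bl k)) (Fin r)) by (rewrite E; simpl; lra).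
    destruct (inf_approx _ r s (rho_S_ge0 m n A (Bl k)) Hrl ltac:(lra)) as [t [[x [Hx ->]] Ht]].
    exists (k, x). simpl. auto. }
  pose proof (rhohat_ge0 m n A B) as H0.
  destruct (rhohat m n A B) as [L|] eqn:E.
  - simpl in H0. apply ER_cv_fin.
    + intros eps He.
      assert (HleL : ER_le (rhohat m n A B) (Fin L)) by (rewrite E; simpl; lra).
      destruct (inf_approx _ L (L + eps/2) (rhohat_S_ge0 m n A B) HleL ltac:(lra)) as [s [[y [Hy ->]] Hs]].
      replace (L + eps) with ((L + eps/2) + eps/2) by lra.
      apply (Hup y); auto; lra.
    + intros eps He. destruct (Rle_dec (L - eps) 0) as [Hl|Hl].
      * exists 0%nat. intros k _. eapply ER_le_trans; [|apply rho_ge0]. simpl; auto.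
      * apply Hlow. lra. try rewrite E. simpl. lra.
  - intros M. destruct (Rle_dec M 0) as [Hl|Hl].
    + exists 0%nat. intros k _. eapply ER_le_trans; [|apply rho_ge0]. simpl; auto.
    + apply Hlow. lra. try rewrite E. simpl. auto.
Qed.

Theorem lemma2p5 (m n : nat) (A B : mat)
  (hn : (0 < n)%nat) (hA : nonneg_mat m n A) (hB : nonneg_mat m n B) :
  (* (1) *)
  ER_le (rhohat m n A B) (rho m n A B) /\
  (* (2) *)
  (forall y, weakly_optimal m n A B y ->
     ((forall i, (i < m)%nat -> 0 < mv n A y i) \/
      (forall i, (i < m)%nat -> 0 < mv n B y i)) ->
     rho m n A B = rhohat m n A B /\ optimal m n A B y) /\
  (* (3) *)
  (pos_mat m n A \/ pos_mat m n B ->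
     rho m n A B = rhohat m n A B /\
     (forall y, weakly_optimal m n A B y -> optimal m n A B y)) /\
  (* (4) *)
  (forall Bl : nat -> mat, (forall l, pos_mat m n (Bl l)) -> mat_cv m n Bl B ->
     ER_cv (fun l => rho m n A (Bl l)) (rhohat m n A B)) /\
  (* (5) *)
  (forall Al : nat -> mat, (forall l, pos_mat m n (Al l)) -> mat_cv m n Al A ->
     no_zero_row m n B ->
     ER_cv (fun l => rho m n (Al l) B) (rho m n A B)).
Proof.
  split; [apply part1; auto|].
  split; [apply part2; auto|].
  split; [apply part3; auto|].
  split; [apply part4; auto|].
  apply part5; auto.
Qed.
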